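(* Let $q=2^t$. The $\mathbb{F}_2$-span of $\{\chi_\ell:\ell\in X_0\}\cup Z$ equals the $\mathbb{F}_2$-span of $\{\chi_\ell:\ell\in X_0\cup L_1\}$.
   Context: Let $q$ be a prime power and $V$ a $4$-dimensional vector space over $\mathbb{F}_q$ with a nonsingular alternating bilinear form and symplectic basis $e_0,e_1,e_2,e_3$ with $(e_0,e_3)=(e_1,e_2)=1$. $P$ is the set of $1$-dimensional subspaces of $V$ (points), $L$ the set of totally isotropic $2$-dimensional subspaces (lines). $p_0=\langle e_0\rangle$, $\ell_0=\langle e_0,e_1\rangle$; $P_1$ is the set of points $(a:b:c:d)$ with $d\ne0$; $L_1$ is the set of lines sharing no point with $\ell_0$. $\mathbb{F}_2[P]$ is the space of functions $P\to\mathbb{F}_2$, $\chi_\ell$ the characteristic function of a line $\ell$; $C(P,L_1)$ is the span of $\{\chi_\ell:\ell\in L_1\}$ in $\mathbb{F}_2[P]$, $\pi_{P_1}:\mathbb{F}_2[P]\to\mathbb{F}_2[P_1]$ is restriction to $P_1$, and $C(P_1,L_1)=\pi_{P_1}(C(P,L_1))$. $X_0$ is the set of the $q$ lines through $p_0$ other than $\ell_0$. $Z\subset\{\chi_\ell:\ell\in L_1\}$ is any set of characteristic functions of lines of $L_1$ which $\pi_{P_1}$ maps bijectively onto a basis of $C(P_1,L_1)$. *)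

(* Defs.v *)
From HB Require Import structures.
From mathcomp Require Import all_boot all_order all_algebra all_field.
Set Implicit Arguments. Unset Strict Implicit. Unset Printing Implicit Defensive.
Import GRing.Theory.
Local Open Scope ring_scope.

Section Geometry.
Variable F : finFieldType.

(* V = F^4 as row vectors; coordinates v 0 i for i = 0..3 w.r.t. e0..e3. *)
Definition Vec := 'rV[F]_4.

Definition ev (i : 'I_4) : Vec := delta_mx 0 i.

Definition sform (u v : Vec) : F :=
  u 0 0 * v 0 3 - u 0 3 * v 0 0 + u 0 1 * v 0 2 - u 0 2 * v 0 1.

Definition span1 (v : Vec) : {set Vec} := [set a *: v | a : F].
Definition span2 (u v : Vec) : {set Vec} := [set a *: u + b *: v | a : F, b : F].

Definition is_point (S : {set Vec}) : bool :=
  [exists v : Vec, (v != 0) && (S == span1 v)].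

Definition is_line (S : {set Vec}) : bool :=
  [exists u : Vec, exists v : Vec,
     [&& u != 0, v \notin span1 u,
         [forall x in span2 u v, forall y in span2 u v, sform x y == 0]
       & S == span2 u v]].

Definition Pt := {S : {set Vec} | is_point S}.
Definition Ln := {S : {set Vec} | is_line S}.

Definition p0 : {set Vec} := span1 (ev 0).
Definition l0 : {set Vec} := span2 (ev 0) (ev 1).

Definition in_P1 (p : Pt) : bool := [exists v in val p, v 0 3 != 0].
Definition P1 := {p : Pt | in_P1 p}.

Definition in_L1 (l : Ln) : bool :=
  ~~ [exists p : Pt, (val p \subset val l) && (val p \subset l0)].

Definition in_X0 (l : Ln) : bool := (p0 \subset val l) && (val l != l0).

Definition L1 : {set Ln} := [set l : Ln | in_L1 l].
Definition X0 : {set Ln} := [set l : Ln | in_X0 l].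

Definition F2P := {ffun Pt -> ('F_2)^o}.
Definition F2P1 := {ffun P1 -> ('F_2)^o}.

Definition chi (l : Ln) : F2P := [ffun p : Pt => ((val p \subset val l) : nat)%:R].

Definition piP1 (f : F2P) : F2P1 := [ffun p : P1 => f (val p)].

Definition CPL1 : {vspace F2P} := <<[seq chi l | l in L1]>>%VS.
Definition CP1L1 : {vspace F2P1} := <<[seq piP1 (chi l) | l in L1]>>%VS.

End Geometry.

(* Main.v *)
Require Import Defs.
From HB Require Import structures.
From mathcomp Require Import all_boot all_order all_algebra all_field.
From Stdlib Require Import Ring Field.
Set Implicit Arguments. Unset Strict Implicit. Unset Printing Implicit Defensive.
Import GRing.Theory.
Local Open Scope ring_scope.

Lemma F2_add2 (x : 'F_2) : x + x = 0.
Proof. by apply/val_inj; case: x => -[|[|]]. Qed.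

Section Geo.
Variable F : finFieldType.

Lemma Fring : @ring_theory F 0 1 +%R *%R (fun x y => x - y) -%R eq.
Proof. split; intros; rewrite ?add0r ?mul1r ?mulrA ?(addrC _ 0) ?addrA ?mulrDl ?subrr //; try (by rewrite addrC); try (by rewrite mulrC).
Qed.
Lemma Ffield : @field_theory F 0 1 +%R *%R (fun x y => x - y) -%R (fun x y => x / y) GRing.inv eq.
Proof. split; [exact Fring| by apply/eqP; rewrite oner_eq0 | by [] | ]. by move=> p hp; rewrite mulVf //; apply/eqP. Qed.
Definition Ffield1 : @field_theory (GRing.PzSemiRing.sort (FinRing_Field__to__GRing_PzSemiRing F)) _ _ _ _ _ _ _ _ (@eq (GRing.PzSemiRing.sort (FinRing_Field__to__GRing_PzSemiRing F))) := Ffield.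
Definition Ffield2 : @field_theory (Algebra.BaseAddMagma.sort (FinRing_Field__to__Algebra_BaseAddMagma F)) _ _ _ _ _ _ _ _ (@eq (Algebra.BaseAddMagma.sort (FinRing_Field__to__Algebra_BaseAddMagma F))) := Ffield.
Definition Ffield3 : @field_theory (Algebra.BaseZmodule.sort (FinRing_Field__to__Algebra_BaseZmodule F)) _ _ _ _ _ _ _ _ (@eq (Algebra.BaseZmodule.sort (FinRing_Field__to__Algebra_BaseZmodule F))) := Ffield.
Add Field Ff0 : Ffield.
Add Field Ff1 : Ffield1.
Add Field Ff2 : Ffield2.
Add Field Ff3 : Ffield3.
Ltac normF :=
 apply: (@addIr _ 0);
 repeat match goal with |- context [@Algebra.add ?i] => assert_fails (constr_eq i (FinRing_Field__to__Algebra_BaseAddMagma F)); change (@Algebra.add i) with (@Algebra.add (FinRing_Field__to__Algebra_BaseAddMagma F)) end;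
 repeat match goal with |- context [@GRing.mul ?i] => assert_fails (constr_eq i (FinRing_Field__to__GRing_PzSemiRing F)); change (@GRing.mul i) with (@GRing.mul (FinRing_Field__to__GRing_PzSemiRing F)) end;
 repeat match goal with |- context [@Algebra.opp ?i] => assert_fails (constr_eq i (FinRing_Field__to__Algebra_BaseZmodule F)); change (@Algebra.opp i) with (@Algebra.opp (FinRing_Field__to__Algebra_BaseZmodule F)) end;
 repeat match goal with |- context [@Algebra.zero ?i] => assert_fails (constr_eq i (FinRing_Field__to__Algebra_BaseAddUMagma F)); change (@Algebra.zero i) with (@Algebra.zero (FinRing_Field__to__Algebra_BaseAddUMagma F)) end;
 repeat match goal with |- context [GRing.one ?i] => assert_fails (constr_eq i (FinRing_Field__to__GRing_PzSemiRing F)); change (GRing.one i) with (GRing.one (FinRing_Field__to__GRing_PzSemiRing F)) end;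
 repeat match goal with |- context [@GRing.inv ?i] => assert_fails (constr_eq i (FinRing_Field__to__GRing_UnitRing F)); change (@GRing.inv i) with (@GRing.inv (FinRing_Field__to__GRing_UnitRing F)) end;
 repeat match goal with |- context [@fun_of_matrix ?T] => assert_fails (constr_eq T (FinRing.Field.sort F)); change (@fun_of_matrix T) with (@fun_of_matrix (FinRing.Field.sort F)) end;
 match goal with |- @eq _ ?a ?b => let T := type of a in change (@eq T a b) end.

Local Notation Vec := (Vec F).
Local Notation B := (@sform F).

Definition mkv (a b c d : F) : Vec := \row_(i < 4) [:: a; b; c; d]`_i.

Lemma mkvE a b c d :
  [/\ mkv a b c d 0 0 = a, mkv a b c d 0 1 = b, mkv a b c d 0 2 = c & mkv a b c d 0 3 = d].
Proof. by rewrite !mxE. Qed.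

Lemma vec_eq (u v : Vec) : u 0 0 = v 0 0 -> u 0 1 = v 0 1 -> u 0 2 = v 0 2 -> u 0 3 = v 0 3 -> u = v.
Proof.
move=> h0 h1 h2 h3; apply/rowP => -[[|[|[|[|k]]]] hk].
- by have -> : Ordinal hk = 0 :> 'I_4 by apply/val_inj.
- by have -> : Ordinal hk = 1 :> 'I_4 by apply/val_inj.
- by have -> : Ordinal hk = 2 :> 'I_4 by apply/val_inj.
- by have -> : Ordinal hk = 3 :> 'I_4 by apply/val_inj.
- by [].
Qed.

Lemma vec_mkv (v : Vec) : v = mkv (v 0 0) (v 0 1) (v 0 2) (v 0 3).
Proof. by apply: vec_eq; rewrite !mxE. Qed.

Lemma sformE (u v : Vec) : B u v = u 0 0 * v 0 3 - u 0 3 * v 0 0 + u 0 1 * v 0 2 - u 0 2 * v 0 1.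
Proof. by []. Qed.

Lemma sformDl (u v w : Vec) : B (u + v) w = B u w + B v w.
Proof. rewrite !sformE !mxE. normF. ring. Qed.
Lemma sformZl a (u w : Vec) : B (a *: u) w = a * B u w.
Proof. rewrite !sformE !mxE. normF. ring. Qed.
Lemma sformNl (u w : Vec) : B (- u) w = - B u w.
Proof. rewrite !sformE !mxE. normF. ring. Qed.
Lemma sformC (u w : Vec) : B u w = - B w u.
Proof. rewrite !sformE. normF. ring. Qed.
Lemma sformDr (u v w : Vec) : B w (u + v) = B w u + B w v.
Proof. by rewrite sformC sformDl opprD -!sformC. Qed.
Lemma sformZr a (u w : Vec) : B w (a *: u) = a * B w u.
Proof. by rewrite sformC sformZl -mulrN -sformC. Qed.
Lemma sformNr (u w : Vec) : B w (- u) = - B w u.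
Proof. by rewrite sformC sformNl opprK -sformC. Qed.
Lemma sformBl (u v w : Vec) : B (u - v) w = B u w - B v w.
Proof. by rewrite sformDl sformNl. Qed.
Lemma sformBr (u v w : Vec) : B w (u - v) = B w u - B w v.
Proof. by rewrite sformDr sformNr. Qed.
Lemma sformvv (u : Vec) : B u u = 0.
Proof. rewrite !sformE. normF. ring. Qed.

Definition sfE := (sformDl, sformDr, sformZl, sformZr, sformNl, sformNr).


Lemma span1P (x v : Vec) : reflect (exists a, x = a *: v) (x \in span1 v).
Proof.
apply: (iffP imsetP) => [[a _ ->]|[a ->]]; first by exists a.
by exists a.
Qed.

Lemma span2P (x u v : Vec) : reflect (exists a b, x = a *: u + b *: v) (x \in span2 u v).
Proof.
apply: (iffP imset2P) => [[a b _ _ ->]|[a [b ->]]]; first by exists a, b.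
by exists a b.
Qed.

Definition scl (S : {set Vec}) := forall a x, x \in S -> a *: x \in S.

Lemma sub_span1 (S : {set Vec}) v : scl S -> (span1 v \subset S) = (v \in S).
Proof.
move=> hS; apply/subsetP/idP => [h|hv x /span1P [a ->]]; last exact: hS.
by apply: h; apply/span1P; exists 1; rewrite scale1r.
Qed.

Lemma span2_lin (u v x y : Vec) a b : x \in span2 u v -> y \in span2 u v -> a *: x + b *: y \in span2 u v.
Proof.
move=> /span2P [a1 [b1 ->]] /span2P [a2 [b2 ->]]; apply/span2P.
exists (a * a1 + b * a2), (a * b1 + b * b2).
by rewrite !scalerDr !scalerA !scalerDl addrACA.
Qed.

Lemma scl_span2 u v : scl (span2 u v).
Proof. move=> a x hx; have := span2_lin a 0 hx hx; by rewrite scale0r addr0. Qed.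

Lemma span1_eq (v w : Vec) c : c != 0 -> w = c *: v -> span1 w = span1 v.
Proof.
move=> hc ->; apply/setP => x; apply/span1P/span1P => -[a ->].
  by exists (a * c); rewrite scalerA.
by exists (a / c); rewrite scalerA divfK.
Qed.

Lemma is_point_span1 (v : Vec) : v != 0 -> is_point (span1 v).
Proof. by move=> hv; apply/existsP; exists v; rewrite hv eqxx. Qed.

Lemma ptP (p : Pt F) : exists2 v, v != 0 & val p = span1 v.
Proof. by case/existsP: (valP p) => v /andP [hv /eqP ->]; exists v. Qed.

Definition e0v : Vec := mkv 1 0 0 0.
Lemma e0v_neq0 : e0v != 0.
Proof. by apply/eqP => /rowP /(_ 0); rewrite !mxE /= => /eqP; rewrite oner_eq0. Qed.

Definition pdef : Pt F := exist _ (span1 e0v) (is_point_span1 e0v_neq0).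
Definition mkPt (v : Vec) : Pt F := insubd pdef (span1 v).
Lemma val_mkPt v : v != 0 -> val (mkPt v) = span1 v.
Proof. by move=> hv; rewrite /mkPt insubdK //; apply: is_point_span1. Qed.

Lemma lnP (l : Ln F) : exists u, exists v,
  [/\ u != 0, v \notin span1 u, forall x y, x \in span2 u v -> y \in span2 u v -> B x y = 0
    & val l = span2 u v].
Proof.
case/existsP: (valP l) => u /existsP [v /and4P [hu hv /forallP ht /eqP ->]].
exists u, v; split => // x y hx hy.
by have /implyP /(_ hx) /forallP /(_ y) /implyP /(_ hy) /eqP := ht x.
Qed.


Definition orth2 (a b : Vec) : {set Vec} := [set x | (B x a == 0) && (B x b == 0)].

Lemma orth2P x a b : reflect (B x a = 0 /\ B x b = 0) (x \in orth2 a b).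
Proof. by rewrite inE; apply: (iffP andP) => -[/eqP ? /eqP ?]. Qed.

Lemma scl_orth2 a b : scl (orth2 a b).
Proof. by move=> c x /orth2P [h1 h2]; apply/orth2P; rewrite !sformZl h1 h2 !mulr0. Qed.

Lemma sub1_span2 (v u w : Vec) : (span1 v \subset span2 u w) = (v \in span2 u w).
Proof. exact/sub_span1/scl_span2. Qed.
Lemma sub1_orth2 (v a b : Vec) : (span1 v \subset orth2 a b) = (v \in orth2 a b).
Proof. exact/sub_span1/scl_orth2. Qed.

Definition sympl (s1 s2 s3 s4 : Vec) :=
  [/\ B s1 s2 = 1, B s3 s4 = 1 & [/\ B s1 s3 = 0, B s1 s4 = 0, B s2 s3 = 0 & B s2 s4 = 0]].
Definition nondeg (s1 s2 s3 s4 : Vec) :=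
  forall v, B v s1 = 0 -> B v s2 = 0 -> B v s3 = 0 -> B v s4 = 0 -> v = 0.

Lemma sympl_swap s1 s2 s3 s4 : sympl s1 s2 s3 s4 -> sympl s3 s4 s1 s2.
Proof.
case=> h12 h34 [h13 h14 h23 h24]; split => //; split.
- by rewrite sformC h13 oppr0.
- by rewrite sformC h23 oppr0.
- by rewrite sformC h14 oppr0.
- by rewrite sformC h24 oppr0.
Qed.

Lemma nondeg_swap s1 s2 s3 s4 : nondeg s1 s2 s3 s4 -> nondeg s3 s4 s1 s2.
Proof. by move=> h v h3 h4 h1 h2; apply: h. Qed.

Section Test.
Variables s1 s2 s3 s4 : Vec.
Hypothesis hs : sympl s1 s2 s3 s4.
Hypothesis hnd : nondeg s1 s2 s3 s4.

Lemma decompN x : x \in orth2 s3 s4 -> x = B x s2 *: s1 - B x s1 *: s2.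
Proof.
case: hs => h12 h34 [h13 h14 h23 h24].
move=> /orth2P [hx3 hx4]; apply/eqP; rewrite -subr_eq0; apply/eqP; apply: hnd;
  rewrite !(sformBl, sformZl) ?sformvv ?h12 ?h13 ?h14 ?h23 ?h24 ?hx3 ?hx4.
- rewrite (sformC s2 s1) h12. normF. ring.
- normF; ring.
- normF; ring.
- normF; ring.
Qed.

Lemma sformN x z : x \in orth2 s3 s4 -> B z x = B x s2 * B z s1 - B x s1 * B z s2.
Proof. by move=> hx; rewrite {1}(decompN hx) sformBr !sformZr. Qed.

Lemma nz_orth x : x \in orth2 s3 s4 -> x != 0 -> (B x s1 != 0) || (B x s2 != 0).
Proof.
move=> hx hx0; rewrite -negb_and; apply/negP => /andP [/eqP h1 /eqP h2].
case/orth2P: hx => h3 h4; by move: hx0; rewrite (hnd h1 h2 h3 h4) eqxx.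
Qed.


Lemma prop_vec x x' : x \in orth2 s3 s4 -> x' \in orth2 s3 s4 -> x != 0 -> B x' x = 0 ->
  exists c, x' = c *: x.
Proof.
move=> hx hx' hx0 hb; move: (hb); rewrite (sformN x' hx) => hrel.
case/orth2P: (hx) => hx3 hx4; case/orth2P: (hx') => hx3' hx4'.
case/orP: (nz_orth hx hx0) => hn.
- exists (B x' s1 / B x s1); apply/eqP; rewrite -subr_eq0; apply/eqP; apply: hnd;
    rewrite !(sformBl, sformZl) ?hx3 ?hx4 ?hx3' ?hx4' ?mulr0 ?subrr //.
  + by rewrite divfK // subrr.
  + transitivity (- (B x s2 * B x' s1 - B x s1 * B x' s2) / B x s1);
      last by rewrite hrel oppr0 mul0r.
    normF; field; exact/eqP.
- exists (B x' s2 / B x s2); apply/eqP; rewrite -subr_eq0; apply/eqP; apply: hnd;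
    rewrite !(sformBl, sformZl) ?hx3 ?hx4 ?hx3' ?hx4' ?mulr0 ?subrr //.
  + transitivity ((B x s2 * B x' s1 - B x s1 * B x' s2) / B x s2);
      last by rewrite hrel mul0r.
    normF; field; exact/eqP.
  + by rewrite divfK // subrr.
Qed.

Lemma uniqA (l : Ln F) (p p' : Pt F) :
  val p \subset val l -> val p \subset orth2 s3 s4 ->
  val p' \subset val l -> val p' \subset orth2 s3 s4 -> p = p'.
Proof.
case: (lnP l) => u [w [hu hw ht el]].
case: (ptP p) => x hx ep; case: (ptP p') => x' hx' ep'.
rewrite ep ep' el !(sub1_span2, sub1_orth2) => hxl hxo hxl' hxo'.
have [c ec] := prop_vec hxo hxo' hx (ht _ _ hxl' hxl).
have hc : c != 0 by apply: contraNneq hx' => c0; rewrite ec c0 scale0r.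
by apply/val_inj; rewrite ep ep' (span1_eq hc ec).
Qed.

Lemma existsB (l : Ln F) (p : Pt F) :
  val p \subset val l -> val p \subset orth2 s3 s4 ->
  exists p' : Pt F, (val p' \subset val l) && (val p' \subset orth2 s1 s2).
Proof.
case: (lnP l) => u [w [hu hw ht el]].
case: (ptP p) => x hx ep.
rewrite ep el !(sub1_span2, sub1_orth2) => hxl hxo.
have hu2 : u \in span2 u w by apply/span2P; exists 1, 0; rewrite scale1r scale0r addr0.
have hw2 : w \in span2 u w by apply/span2P; exists 0, 1; rewrite scale1r scale0r add0r.
have [z [hz2 hzx]] : exists z, z \in span2 u w /\ z \notin span1 x.
  case hux : (u \in span1 x); last by exists u; rewrite hux.
  case hwx : (w \in span1 x); last by exists w; rewrite hwx.
  case/span1P: hux => a ea; case/span1P: hwx => b eb.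
  have ha : a != 0 by apply: contraNneq hu => a0; rewrite ea a0 scale0r.
  case/negP: hw; apply/span1P; exists (b / a).
  by rewrite ea eb scalerA divfK.
have hzx0 : B z x = 0 := ht _ _ hz2 hxl.
have hrel := hzx0; rewrite (sformN z hxo) in hrel.
have mk : forall a b, a != 0 -> a *: z - b *: x \in orth2 s1 s2 ->
    exists p' : Pt F, (val p' \subset span2 u w) && (val p' \subset orth2 s1 s2).
  move=> a b ha hy.
  have hy0 : a *: z - b *: x != 0.
    apply: contraNneq hzx => /eqP; rewrite subr_eq0 => /eqP e; apply/span1P; exists (b / a).
    have -> : z = a^-1 *: (a *: z) by rewrite scalerA mulVf // scale1r.
    by rewrite e scalerA mulrC.
  exists (mkPt (a *: z - b *: x)); rewrite val_mkPt // !(sub1_span2, sub1_orth2) hy andbT.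
  by rewrite -scaleNr; apply: span2_lin.
case/orP: (nz_orth hxo hx) => hn.
- apply: (mk (B x s1) (B z s1) hn); apply/orth2P; rewrite !(sformBl, sformZl); split.
  + normF; ring.
  + transitivity (- (B x s2 * B z s1 - B x s1 * B z s2)); last by rewrite hrel oppr0.
    normF; ring.
- apply: (mk (B x s2) (B z s2) hn); apply/orth2P; rewrite !(sformBl, sformZl); split.
  + transitivity (B x s2 * B z s1 - B x s1 * B z s2); last by rewrite hrel.
    normF; ring.
  + normF; ring.
Qed.

End Test.

Lemma card_eq01 (T : finType) (A C : {set T}) :
  (forall x y, x \in A -> y \in A -> x = y) -> (forall x y, x \in C -> y \in C -> x = y) ->
  (forall x, x \in A -> exists y, y \in C) -> (forall x, x \in C -> exists y, y \in A) ->
  #|A| = #|C|.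
Proof.
move=> uA uC hAC hCA.
case: (set_0Vmem A) => [A0|[a ha]]; case: (set_0Vmem C) => [C0|[c hc]].
- by rewrite A0 C0.
- by case: (hCA c hc) => y; rewrite A0 inE.
- by case: (hAC a ha) => y; rewrite C0 inE.
have -> : A = [set a] by apply/setP => x; rewrite inE; apply/idP/eqP => [h|->] //; exact: uA.
have -> : C = [set c] by apply/setP => x; rewrite inE; apply/idP/eqP => [h|->] //; exact: uC.
by rewrite !cards1.
Qed.

Lemma card_test s1 s2 s3 s4 (l : Ln F) : sympl s1 s2 s3 s4 -> nondeg s1 s2 s3 s4 ->
  #|[set p : Pt F | (val p \subset val l) && (val p \subset orth2 s3 s4)]| =
  #|[set p : Pt F | (val p \subset val l) && (val p \subset orth2 s1 s2)]|.
Proof.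
move=> hs hnd; have hs' := sympl_swap hs; have hnd' := nondeg_swap hnd.
apply: card_eq01.
- by move=> x y; rewrite !inE => /andP [a1 a2] /andP [b1 b2]; exact: (uniqA hs hnd a1 a2 b1 b2).
- by move=> x y; rewrite !inE => /andP [a1 a2] /andP [b1 b2]; exact: (uniqA hs' hnd' a1 a2 b1 b2).
- move=> x; rewrite inE => /andP [h1 h2]; case: (existsB hs hnd h1 h2) => y hy.
  by exists y; rewrite inE.
- move=> x; rewrite inE => /andP [h1 h2]; case: (existsB hs' hnd' h1 h2) => y hy.
  by exists y; rewrite inE.
Qed.


Definition ip (f : F2P F) (h : Pt F -> 'F_2) : 'F_2 := \sum_p (f p : 'F_2) * h p.

Lemma ffun_sumZ (X : seq (F2P F)) (c : 'I_(size X) -> 'F_2) p :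
  (\sum_i c i *: X`_i) p = \sum_i c i * (X`_i p : 'F_2).
Proof. by rewrite sum_ffunE; apply: eq_bigr => i _; rewrite ffunE. Qed.

Lemma eval_span (X : seq (F2P F)) g p : g \in <<X>>%VS -> (forall x, x \in X -> x p = 0) -> g p = 0.
Proof.
move=> /(coord_span (X := in_tuple X)) -> h.
rewrite ffun_sumZ big1 // => i _; rewrite h ?mulr0 //; exact: mem_nth.
Qed.

Lemma ip_span (X : seq (F2P F)) g h : g \in <<X>>%VS -> (forall x, x \in X -> ip x h = 0) -> ip g h = 0.
Proof.
move=> /(coord_span (X := in_tuple X)) -> hX.
rewrite /ip; under eq_bigr => p _ do rewrite ffun_sumZ mulr_suml.
rewrite exchange_big big1 // => i _ /=.
under eq_bigr => p _ do rewrite -mulrA.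
by rewrite -mulr_sumr -/(ip _ h) hX ?mulr0 //; exact: mem_nth.
Qed.

Definition tfun (s1 s2 s3 s4 : Vec) (p : Pt F) : 'F_2 :=
  ((val p \subset orth2 s3 s4) : nat)%:R + ((val p \subset orth2 s1 s2) : nat)%:R.

Lemma sum_bool (T : finType) (P Q : pred T) :
  \sum_(p : T) (((P p : nat)%:R : 'F_2) * (Q p : nat)%:R) = #|[set p | P p && Q p]|%:R.
Proof.
rewrite -sum1_card natr_sum [in RHS]big_mkcond /=; apply: eq_bigr => i _.
by rewrite inE; case: (P i); case: (Q i); rewrite ?mul1r ?mul0r.
Qed.

Lemma ip_chi_test s1 s2 s3 s4 (l : Ln F) : sympl s1 s2 s3 s4 -> nondeg s1 s2 s3 s4 ->
  ip (chi l) (tfun s1 s2 s3 s4) = 0.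
Proof.
move=> hs hnd; rewrite /ip.
under eq_bigr => p _ do rewrite ffunE mulrDr.
rewrite big_split /= !(sum_bool (fun p : Pt F => val p \subset val l)).
by rewrite (card_test l hs hnd) F2_add2.
Qed.


Lemma sform_mkv a b c d a' b' c' d' :
  B (mkv a b c d) (mkv a' b' c' d') = a * d' - d * a' + b * c' - c * b'.
Proof. by rewrite sformE; case: (mkvE a b c d) => -> -> -> ->; case: (mkvE a' b' c' d') => -> -> -> ->. Qed.

Lemma mkvZ k a b c d : k *: mkv a b c d = mkv (k * a) (k * b) (k * c) (k * d).
Proof. by apply: vec_eq; rewrite !mxE. Qed.
Lemma mkvD a b c d a' b' c' d' : mkv a b c d + mkv a' b' c' d' = mkv (a + a') (b + b') (c + c') (d + d').
Proof. by apply: vec_eq; rewrite !mxE. Qed.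
Lemma mkv_inj a b c d a' b' c' d' : mkv a b c d = mkv a' b' c' d' -> [/\ a = a', b = b', c = c' & d = d'].
Proof.
move=> e; case: (mkvE a b c d) => e1 e2 e3 e4; case: (mkvE a' b' c' d') => f1 f2 f3 f4.
by split; [rewrite -e1 -f1 e | rewrite -e2 -f2 e | rewrite -e3 -f3 e | rewrite -e4 -f4 e].
Qed.

Lemma ev0E : ev F 0 = e0v.
Proof. by apply: vec_eq; rewrite !mxE. Qed.
Definition e1v : Vec := mkv 0 1 0 0.
Lemma ev1E : ev F 1 = e1v.
Proof. by apply: vec_eq; rewrite !mxE. Qed.


Definition wv (a b : F) : Vec := mkv a b 1 0.
Lemma wv_neq0 a b : wv a b != 0.
Proof.
apply/eqP => e; have := mkvE a b 1 0; rewrite -/(wv a b) e => -[_ _ h _].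
by move: h; rewrite mxE => /eqP; rewrite eq_sym oner_eq0.
Qed.
Definition Pw (a b : F) : Pt F := mkPt (wv a b).
Lemma val_Pw a b : val (Pw a b) = span1 (wv a b).
Proof. exact/val_mkPt/wv_neq0. Qed.

Lemma self_span1 (v : Vec) : v \in span1 v.
Proof. by apply/span1P; exists 1; rewrite scale1r. Qed.

Lemma Pw_eq a b c d : (Pw a b == Pw c d) = (a == c) && (b == d).
Proof.
apply/eqP/andP => [h|[/eqP -> /eqP ->]] //.
have : wv a b \in val (Pw c d) by rewrite -h val_Pw self_span1.
rewrite val_Pw => /span1P [k]; rewrite /wv mkvZ => /mkv_inj [-> -> hk _].
by move: hk; rewrite mulr1 => <-; rewrite !mul1r !eqxx.
Qed.

Definition P0 : Pt F := mkPt e0v.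

Lemma span2_mem0 (u w : Vec) : u \in span2 u w.
Proof. by apply/span2P; exists 1, 0; rewrite scale1r scale0r addr0. Qed.
Lemma span2_mem1 (u w : Vec) : w \in span2 u w.
Proof. by apply/span2P; exists 0, 1; rewrite scale1r scale0r add0r. Qed.

Lemma isl_M (y : F) : is_line (span2 e0v (wv 0 y)).
Proof.
apply/existsP; exists e0v; apply/existsP; exists (wv 0 y); apply/and4P; split => //.
- exact: e0v_neq0.
- apply/span1P => -[k]; rewrite /wv /e0v mkvZ => /mkv_inj [_ _ h _].
  by move: h; rewrite mulr0 => /eqP; rewrite oner_eq0.
- apply/forallP => x; apply/implyP => /span2P [a [b ->]].
  apply/forallP => z; apply/implyP => /span2P [c [d ->]].
  by rewrite /e0v /wv !mkvZ !mkvD sform_mkv; apply/eqP; normF; ring.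
Qed.

Definition Mline (y : F) : Ln F := exist (fun S => is_line S) (span2 e0v (wv 0 y)) (isl_M y).

Lemma l0E : l0 F = span2 e0v e1v.
Proof. by rewrite /l0 ev0E ev1E. Qed.
Lemma p0E : p0 F = span1 e0v.
Proof. by rewrite /p0 ev0E. Qed.

Lemma Mline_X0 y : Mline y \in X0 F.
Proof.
rewrite inE /in_X0 /= p0E sub1_span2 span2_mem0 /=.
apply/eqP => e; have : wv 0 y \in l0 F by rewrite -e span2_mem1.
rewrite l0E => /span2P [a [b]]; rewrite /wv /e0v /e1v !mkvZ mkvD => /mkv_inj [_ _ h _].
by move: h; rewrite !mulr0 addr0 => /eqP; rewrite oner_eq0.
Qed.


Lemma ptP4 (p : Pt F) : exists a b c d, mkv a b c d != 0 /\ val p = span1 (mkv a b c d).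
Proof.
case: (ptP p) => v hv ep; exists (v 0 0), (v 0 1), (v 0 2), (v 0 3).
by rewrite -vec_mkv.
Qed.

Lemma mkv0 : mkv 0 0 0 0 = 0.
Proof. by apply: vec_eq; rewrite !mxE. Qed.

Lemma pt_cases (p : Pt F) :
  [\/ in_P1 p, p = P0,
      (val p \subset l0 F) /\ (forall y, ~~ (val p \subset val (Mline y)))
    | exists a b, p = Pw a b].
Proof.
case: (ptP4 p) => a [b [c [d [hv ep]]]].
have [hd|hd] := eqVneq d 0; last first.
  apply: Or41; apply/existsP; exists (mkv a b c d); rewrite ep self_span1 /=.
  by case: (mkvE a b c d) => _ _ _ ->.
subst d.
have [hc|hc] := eqVneq c 0; last first.
  apply: Or44; exists (a / c), (b / c); apply/val_inj; rewrite val_Pw ep.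
  apply: (span1_eq (c := c)) => //; rewrite /wv mkvZ.
  by congr mkv; rewrite ?mulr1 ?mulr0 // mulrC divfK.
subst c.
have [hb|hb] := eqVneq b 0.
  subst b; apply: Or42; apply/val_inj; rewrite ep /P0 val_mkPt ?e0v_neq0 //.
  have ha : a != 0 by apply: contraNneq hv => ->; rewrite mkv0.
  by apply: (span1_eq (c := a)) => //; rewrite /e0v mkvZ !mulr0 mulr1.
apply: Or43; split.
  rewrite ep l0E sub1_span2; apply/span2P; exists a, b.
  by rewrite /e0v /e1v !mkvZ mkvD !mulr0 !mulr1 !addr0 add0r.
move=> y; rewrite ep /= sub1_span2; apply/span2P => -[k [m]].
rewrite /e0v /wv !mkvZ mkvD => /mkv_inj [_ h1 h2 _].
move: h2; rewrite mulr0 mulr1 add0r => h2; subst m.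
by move: hb; rewrite h1 !mul0r mulr0 addr0 eqxx.
Qed.

Lemma chiM_Pw y a b : chi (Mline y) (Pw a b) = ((b == y) : nat)%:R.
Proof.
rewrite ffunE val_Pw /= sub1_span2.
suff -> : (wv a b \in span2 e0v (wv 0 y)) = (b == y) by [].
apply/idP/eqP => [/span2P [k [m]]|->].
  rewrite /e0v /wv !mkvZ mkvD => /mkv_inj [_ h1 h2 _].
  by move: h2 h1; rewrite !mulr0 !add0r mulr1 => <-; rewrite mul1r.
apply/(span2P _ e0v (wv 0 y)); exists a, 1; rewrite /e0v /wv !mkvZ mkvD; congr mkv; rewrite ?mulr0 ?mulr1 ?addr0 ?add0r ?mul1r. all: by [].
Qed.

Lemma span2M_3 y x : x \in span2 e0v (wv 0 y) -> x 0 3 = 0.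
Proof.
case/span2P => k [m ->]; rewrite /e0v /wv !mkvZ mkvD.
by case: (mkvE (k * 1 + m * 0) (k * 0 + m * y) (k * 0 + m * 1) (k * 0 + m * 0)) => _ _ _ ->; rewrite !mulr0 addr0.
Qed.

Lemma chiM_P1 y (p : Pt F) : in_P1 p -> chi (Mline y) p = 0.
Proof.
case/existsP => v /andP [hv h3]; rewrite ffunE.
case: (boolP (val p \subset _)) => //= /subsetP /(_ v hv) /span2M_3 e.
by move: h3; rewrite e eqxx.
Qed.

Lemma chiM_P0 y : chi (Mline y) P0 = 1.
Proof.
rewrite ffunE /P0 val_mkPt ?e0v_neq0 // sub1_span2 /=.
by rewrite span2_mem0.
Qed.


Section G.
Variable g : F2P F.
Hypothesis hg : g \in <<[seq chi l | l in L1 F]>>%VS.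
Hypothesis hP1 : forall q : P1 F, g (val q) = 0.

Lemma g_P1 (p : Pt F) : in_P1 p -> g p = 0.
Proof. by move=> h; exact: (hP1 (exist (fun p => in_P1 p) p h)). Qed.

Lemma g_l0 (p : Pt F) : val p \subset l0 F -> g p = 0.
Proof.
move=> hp; apply: (eval_span hg) => x /mapP [l]; rewrite mem_enum inE => hl ->; rewrite ffunE.
case: (boolP (val p \subset val l)) => // h; case/negP: hl; apply/existsP; exists p.
by rewrite h hp.
Qed.

Lemma g_P0 : g P0 = 0.
Proof. by apply: g_l0; rewrite /P0 val_mkPt ?e0v_neq0 // l0E sub1_span2 span2_mem0. Qed.

Lemma g_supp (p : Pt F) : g p != 0 -> exists a b, p = Pw a b.
Proof.
case: (pt_cases p) => [h|->|[h _]|//].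
- by rewrite (g_P1 h) eqxx.
- by rewrite g_P0 eqxx.
- by rewrite (g_l0 h) eqxx.
Qed.

Lemma g_ip s1 s2 s3 s4 : sympl s1 s2 s3 s4 -> nondeg s1 s2 s3 s4 -> ip g (tfun s1 s2 s3 s4) = 0.
Proof. by move=> hs hnd; apply: (ip_span hg) => x /mapP [l _ ->]; exact: ip_chi_test. Qed.

Lemma ip_eval (I : finType) (Q : I -> Pt F) h :
  (forall a b, h (Pw a b) = \sum_i ((Pw a b == Q i) : nat)%:R) -> ip g h = \sum_i g (Q i).
Proof.
move=> hh; rewrite /ip.
transitivity (\sum_p (g p : 'F_2) * \sum_i ((p == Q i) : nat)%:R).
  apply: eq_bigr => p _; case: (eqVneq (g p) 0) => [->|/g_supp [a [b ->]]]; by rewrite ?mul0r // hh.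
under eq_bigr => p _ do rewrite mulr_sumr.
rewrite exchange_big; apply: eq_bigr => i _.
rewrite (bigD1 (Q i)) //= eqxx mulr1 big1 ?addr0 // => p /negbTE ->; by rewrite mulr0.
Qed.


Lemma sum_eqb (b : F) : \sum_(y : F) (((b == y) : nat)%:R : 'F_2) = 1.
Proof.
rewrite (bigD1 b) //= eqxx big1 ?addr0 // => y hy.
by rewrite eq_sym (negbTE hy).
Qed.

Lemma g_sum0 : \sum_(y : F) g (Pw 0 y) = 0.
Proof.
have hs : sympl (mkv 1 0 0 0) (mkv 0 0 0 1) (mkv 0 1 0 0) (mkv 0 0 1 0).
  by split; [| | split]; rewrite sform_mkv; normF; ring.
have hnd : nondeg (mkv 1 0 0 0) (mkv 0 0 0 1) (mkv 0 1 0 0) (mkv 0 0 1 0).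
  move=> v; rewrite (vec_mkv v) !sform_mkv => h1 h2 h3 h4; rewrite -mkv0; congr mkv.
  - by rewrite -[RHS]h2; normF; ring.
  - by rewrite -[RHS]h4; normF; ring.
  - by rewrite -[RHS]oppr0 -[in RHS]h3; normF; ring.
  - by rewrite -[RHS]oppr0 -[in RHS]h1; normF; ring.
rewrite -(ip_eval (h := tfun (mkv 1 0 0 0) (mkv 0 0 0 1) (mkv 0 1 0 0) (mkv 0 0 1 0)) (Q := fun y => Pw 0 y)); first exact: g_ip hs hnd.
move=> a b; rewrite /tfun val_Pw !sub1_orth2.
have E3 : B (wv a b) (mkv 0 1 0 0) = - 1 by rewrite sform_mkv; normF; ring.
have E1 : B (wv a b) (mkv 1 0 0 0) = 0 by rewrite sform_mkv; normF; ring.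
have E2 : B (wv a b) (mkv 0 0 0 1) = a by rewrite sform_mkv; normF; ring.
rewrite !inE E3 E1 E2 oppr_eq0 oner_eq0 /= eqxx /= add0r.
under eq_bigr => y _ do rewrite Pw_eq.
case ha: (a == 0); first by rewrite sum_eqb.
by rewrite big1.
Qed.

Lemma g_const x y : g (Pw x y) = g (Pw 0 y).
Proof.
have [->|hx] := eqVneq x 0; first by [].
have hs : sympl (mkv x y 1 0) (mkv 0 0 0 x^-1) (mkv 0 y 1 0) (mkv 0 (-1) 0 (- x^-1)).
  split; [| | split]; rewrite sform_mkv; normF; try ring; field; exact/eqP.
have hnd : nondeg (mkv x y 1 0) (mkv 0 0 0 x^-1) (mkv 0 y 1 0) (mkv 0 (-1) 0 (- x^-1)).
  move=> v; rewrite (vec_mkv v) !sform_mkv => h1 h2 h3 h4.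
  have e0 : v 0 0 = 0.
    transitivity (x * (v 0 0 * x^-1 - v 0 3 * 0 + v 0 1 * 0 - v 0 2 * 0)); last by rewrite h2 mulr0.
    normF; field; exact/eqP.
  have e2 : v 0 2 = 0.
    transitivity ((v 0 0 * - x^-1 - v 0 3 * 0 + v 0 1 * 0 - v 0 2 * -1) + v 0 0 / x); last by rewrite h4 e0 mul0r addr0.
    normF; field; exact/eqP.
  have e1 : v 0 1 = 0.
    transitivity ((v 0 0 * 0 - v 0 3 * 0 + v 0 1 * 1 - v 0 2 * y) + v 0 2 * y); last by rewrite h3 e2 mul0r addr0.
    normF; ring.
  have e3 : v 0 3 = 0.
    transitivity (((v 0 0 * 0 - v 0 3 * 0 + v 0 1 * 1 - v 0 2 * y) - (v 0 0 * 0 - v 0 3 * x + v 0 1 * 1 - v 0 2 * y)) / x);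
      last by rewrite h3 h1 subrr mul0r.
    normF; field; exact/eqP.
  by rewrite e0 e1 e2 e3 mkv0.
have := g_ip hs hnd.
rewrite (ip_eval (Q := fun i : bool => if i then Pw x y else Pw 0 y)).
  rewrite big_bool /= => /eqP; rewrite addr_eq0 => /eqP ->.
  by apply/eqP; rewrite eq_sym -addr_eq0 F2_add2.
move=> a b; rewrite /tfun val_Pw !sub1_orth2 big_bool /= !Pw_eq.
have E3 : B (wv a b) (mkv 0 y 1 0) = b - y by rewrite sform_mkv; normF; ring.
have E4 : B (wv a b) (mkv 0 (-1) 0 (- x^-1)) = 1 - a / x by rewrite sform_mkv; normF; ring.
have E1 : B (wv a b) (mkv x y 1 0) = b - y by rewrite sform_mkv; normF; ring.
have E2 : B (wv a b) (mkv 0 0 0 x^-1) = a / x by rewrite sform_mkv; normF; ring.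
rewrite !inE E3 E4 E1 E2 !subr_eq0 mulf_eq0 invr_eq0 (negbTE hx) orbF.
have -> : (1 == a / x) = (a == x).
  apply/eqP/eqP => [h|->]; last by rewrite divff.
  by rewrite -[a](divfK hx) -h mul1r.
by rewrite andbC [(b == y) && _]andbC.
Qed.

Lemma g_decomp : g = \sum_(y : F) g (Pw 0 y) *: chi (Mline y).
Proof.
apply/ffunP => p; rewrite sum_ffunE.
under eq_bigr => y _ do rewrite ffunE.
case: (pt_cases p) => [h|->|[h hn]|[a [b ->]]].
- by rewrite (g_P1 h) big1 // => y _; rewrite chiM_P1 // scaler0.
- transitivity (\sum_(y : F) g (Pw 0 y)); first by rewrite g_sum0 g_P0.
  apply: eq_bigr => y _; rewrite chiM_P0.
  by rewrite -[_ *: _]/(_ * _) mulr1.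
- rewrite (g_l0 h) big1 // => y _; rewrite ffunE (negbTE (hn y)) /=.
  exact: scaler0.
- rewrite g_const (bigD1 b) //= chiM_Pw eqxx big1 ?addr0.
    exact: (esym (mulr1 _)).
  by move=> y hy; rewrite chiM_Pw eq_sym (negbTE hy); exact: scaler0.
Qed.

Lemma g_inX0 : g \in <<[seq chi l | l in X0 F]>>%VS.
Proof.
rewrite g_decomp; apply: rpred_sum => y _; apply: rpredZ; apply: memv_span.
by apply: map_f; rewrite mem_enum Mline_X0.
Qed.

End G.
End Geo.

Theorem corollary14 (t : nat) (F : finFieldType) (hq : #|F| = (2 ^ t)%N)
  (Z : {set F2P F})
  (hZsub : forall f, f \in Z -> exists2 l : Ln F, l \in L1 F & f = chi l)
  (hZinj : {in Z &, injective (@piP1 F)})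
  (hZbasis : basis_of (CP1L1 F) [seq piP1 f | f <- enum Z]) :
  <<[seq chi l | l in X0 F] ++ enum Z>>%VS =
  <<[seq chi l | l in X0 F :|: L1 F]>>%VS.
Proof.
apply/eqP; rewrite eqEsubv; apply/andP; split.
- apply/span_subvP => f; rewrite mem_cat => /orP [] hf.
  + apply: memv_span; case/mapP: hf => l; rewrite mem_enum => hl ->.
    by apply: map_f; rewrite mem_enum inE hl.
  + have [l hl ->] : exists2 l : Ln F, l \in L1 F & f = chi l by apply: hZsub; rewrite -mem_enum.
    by apply: memv_span; apply: map_f; rewrite mem_enum inE hl orbT.
apply/span_subvP => f /mapP [l]; rewrite mem_enum inE => /orP [hl|hl] ->.
  by apply: memv_span; rewrite mem_cat; apply/orP; left; apply: map_f; rewrite mem_enum.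
set Zs := enum Z; set X := [seq chi l | l in X0 F].
set S := [seq piP1 f | f <- Zs].
have hS : <<S>>%VS = CP1L1 F by case/andP: hZbasis => /eqP.
have hpl : piP1 (chi l) \in <<S>>%VS.
  by rewrite hS; apply: memv_span; apply: map_f; rewrite mem_enum.
have ec := coord_span (X := in_tuple S) hpl.
set c := fun i => coord (in_tuple S) i (piP1 (chi l)).
have hsz : size S = size Zs by rewrite size_map.
pose zs := \sum_(i < size S) c i *: Zs`_i.
have hZi : forall i : 'I_(size S), Zs`_i \in Z.
  by move=> i; rewrite -mem_enum; apply: mem_nth; rewrite -hsz.
have hzs : zs \in <<X ++ Zs>>%VS.
  apply: rpred_sum => i _; apply: rpredZ; apply: memv_span; rewrite mem_cat; apply/orP; right.
  by apply: mem_nth; rewrite -hsz.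
pose gg := chi l - zs.
have hgg : gg \in <<[seq chi l | l in L1 F]>>%VS.
  apply: rpredB; first by apply: memv_span; apply: map_f; rewrite mem_enum.
  apply: rpred_sum => i _; apply: rpredZ.
  have [l' hl' ->] := hZsub _ (hZi i).
  by apply: memv_span; apply: map_f; rewrite mem_enum.
have hP : forall q : P1 F, gg (val q) = 0.
  move=> q; have := congr1 (fun f : F2P1 F => f q) ec; rewrite /= !ffunE !sum_ffunE => e.
  rewrite /gg /zs.
  transitivity ((\sum_(i < size S) (coord (in_tuple S) i (piP1 (chi l)) *: S`_i) q : 'F_2) - \sum_i (c i *: Zs`_i) (val q)).
    by rewrite -e.
  apply/eqP; rewrite subr_eq0; apply/eqP.
  apply: eq_bigr => i _; rewrite !ffunE.
  rewrite (nth_map 0); last by rewrite -hsz.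
  by rewrite ffunE.
have hggX := g_inX0 hgg hP.
have -> : chi l = gg + zs by rewrite /gg subrK.
apply: rpredD => //.
apply: (subvP (sub_span _)) hggX => x hx; by rewrite mem_cat hx.
Qed.
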